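(* Let $\Theta$ be a space of input histories. Every input history $h\in\Theta$ has at least one tip event, i.e. $\mathrm{tips}_\Theta(h)\neq\emptyset$; and every extended input history $h\in\mathrm{Ext}(\Theta)$ with $h\notin\Theta$ has no tip events, i.e. $\mathrm{tips}_\Theta(h)=\emptyset$.
   Context: A partial function is a function $f$ with domain $\mathrm{dom}(f)$ a subset of an index set, values in given sets; ordered by restriction ($f\le g$ iff $\mathrm{dom}(f)\subseteq\mathrm{dom}(g)$, $g|_{\mathrm{dom}(f)}=f$). Compatible = agreeing on common domain; a compatible set $\mathcal F$ has join $\bigvee\mathcal F$ (union). $\Theta$ is $\vee$-prime if for compatible $\mathcal F\subseteq\Theta$ with $\bigvee\mathcal F\in\Theta$ we have $\bigvee\mathcal F\in\mathcal F$. A space of input histories is a finite $\vee$-prime set of partial functions; $\mathrm{Ext}(\Theta)=\{\bigvee\mathcal F:\emptyset\ne\mathcal F\subseteq\Theta\text{ compatible}\}$. For $h\in\mathrm{Ext}(\Theta)$, $\mathrm{tips}_\Theta(h)=\mathrm{dom}(h)\setminus\bigcup\{\mathrm{dom}(k):k\in\mathrm{Ext}(\Theta),k<h\}$. *)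

(* Defs.v *)
From Stdlib Require Import List.

Set Implicit Arguments.

Section PF.
Variables (I : Type) (V : I -> Type).

Definition pfun := forall i : I, option (V i).

Definition dom (f : pfun) (i : I) : Prop := f i <> None.

Definition pf_le (f g : pfun) : Prop :=
  forall i, f i <> None -> g i = f i.

Definition pf_lt (f g : pfun) : Prop := pf_le f g /\ f <> g.

Definition pfset := pfun -> Prop.

Definition subset (A B : pfset) : Prop := forall f, A f -> B f.

Definition compat (f g : pfun) : Prop :=
  forall i x y, f i = Some x -> g i = Some y -> x = y.

Definition compatible (F : pfset) : Prop :=
  forall f g, F f -> F g -> compat f g.

Definition is_join (F : pfset) (g : pfun) : Prop :=
  (forall i, dom g i <-> exists f, F f /\ dom f i) /\
  (forall f, F f -> pf_le f g).

(* Θ is ∨-prime (F ranges over all compatible subsets, including ∅). *)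
Definition join_prime (Theta : pfset) : Prop :=
  forall (F : pfset) (g : pfun),
    subset F Theta -> compatible F -> is_join F g -> Theta g -> F g.

Definition finite_set (A : pfset) : Prop :=
  exists l : list pfun, forall f, A f <-> In f l.

Definition input_history_space (Theta : pfset) : Prop :=
  finite_set Theta /\ join_prime Theta.

Definition Ext (Theta : pfset) : pfset := fun h =>
  exists F : pfset, subset F Theta /\ (exists f, F f) /\ compatible F /\
                    is_join F h.

Definition tips (Theta : pfset) (h : pfun) (i : I) : Prop :=
  dom h i /\ ~ (exists k, Ext Theta k /\ pf_lt k h /\ dom k i).

End PF.

(* Main.v *)
Require Import Defs.
From Stdlib Require Import Classical FunctionalExtensionality.

Lemma pf_antisym (I : Type) (V : I -> Type) (f g : pfun V) :
  pf_le f g -> pf_le g f -> f = g.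
Proof.
  intros H1 H2. apply functional_extensionality_dep. intro i.
  destruct (f i) eqn:E.
  - rewrite H1; [now rewrite E | rewrite E; discriminate].
  - destruct (g i) eqn:E2; [|reflexivity].
    assert (f i = g i) by (apply H2; congruence); congruence.
Qed.

Lemma pf_le_trans (I : Type) (V : I -> Type) (f g h : pfun V) :
  pf_le f g -> pf_le g h -> pf_le f h.
Proof.
  intros H1 H2 i Hi. rewrite H2; [apply H1; exact Hi|].
  rewrite H1; exact Hi.
Qed.

Lemma theta_ext (I : Type) (V : I -> Type) (Theta : pfset V) f :
  Theta f -> Ext Theta f.
Proof.
  intro Hf. exists (fun g => g = f). repeat split.
  - intros g ->; exact Hf.
  - exists f; reflexivity.
  - intros g1 g2 -> -> i x y E1 E2; congruence.
  - intro Hd; exists f; auto.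
  - intros [g [-> Hg]]; exact Hg.
  - intros g -> i _; reflexivity.
Qed.

Theorem proposition15 (I : Type) (V : I -> Type) (Theta : pfset V) :
  input_history_space Theta ->
  (forall h, Theta h -> exists i, tips Theta h i) /\
  (forall h, Ext Theta h -> ~ Theta h -> forall i, ~ tips Theta h i).
Proof.
  intros [_ Hjp]. split.
  - intros h Hh. apply NNPP. intro Hno.
    assert (Hall : forall i, dom h i -> exists k, Ext Theta k /\ pf_lt k h /\ dom k i).
    { intros i Hi. apply NNPP. intro Hn. apply Hno. exists i. split; assumption. }
    set (F := fun f => Theta f /\ pf_lt f h).
    assert (HF : F h).
    { apply (Hjp F h).
      - intros f [Hf _]; exact Hf.
      - intros f g [_ [Hf _]] [_ [Hg _]] i x y E1 E2.
        assert (h i = f i) by (apply Hf; congruence).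
        assert (h i = g i) by (apply Hg; congruence).
        congruence.
      - split.
        + intro i. split.
          * intro Hi. destruct (Hall i Hi) as [k [[G [HGs [_ [_ [HGj1 HGj2]]]]] [[Hkh Hneq] Hki]]].
            apply HGj1 in Hki. destruct Hki as [f [HGf Hfi]].
            exists f. split; [|exact Hfi]. split; [apply HGs; exact HGf|].
            split; [apply (@pf_le_trans _ _ f k h (HGj2 f HGf) Hkh)|].
            intro Heq. subst f. apply Hneq. apply pf_antisym; [exact Hkh | exact (HGj2 _ HGf)].
          * intros [f [[_ [Hf _]] Hfi]] E. apply Hfi. rewrite <- (Hf i Hfi). exact E.
        + intros f [_ [Hf _]]. exact Hf.
      - exact Hh. }
    destruct HF as [_ [_ Hn]]. apply Hn; reflexivity.
  - intros h [F [HFs [_ [_ [Hj1 Hj2]]]]] Hnh i [Hi Hn].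
    apply Hj1 in Hi. destruct Hi as [f [HFf Hfi]].
    apply Hn. exists f. split; [apply theta_ext; apply HFs; exact HFf|].
    split; [|exact Hfi]. split; [apply Hj2; exact HFf|].
    intro Heq. subst f. apply Hnh. apply HFs. exact HFf.
Qed.
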